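(* For a ring $R$, the following are equivalent: (1) $R$ is a DT ring; (2) $R$ is a semi-tripotent ring; (3) for each $a\in R$ there exist idempotents $e,f\in R$ with $ef=fe$ and $j\in J(R)$ such that $a=e+f+j$; (4) for each $a\in R$ there exist idempotents $e,f\in R$ with $ef=fe$ and $j\in J(R)$ such that $a=e-f+j$; (5) for each $a\in R$ there exist idempotents $e,f\in R$ with $ef=0=fe$ and $j\in J(R)$ such that $a=e-f+j$.
   Context: All rings are associative with identity. $J(R)$ is the Jacobson radical, $U(R)$ the group of units. $\Delta(R)=\{x\in R: x+u\in U(R)\text{ for all }u\in U(R)\}$. $\mathrm{Tr}(R)=\{x\in R: x^3=x\}$. A ring $R$ is a DT ring if every $r\in R$ can be written $r=e+d$ with $e\in\mathrm{Tr}(R)$ and $d\in\Delta(R)$. A ring $R$ is semi-tripotent if every $r\in R$ can be written $r=e+j$ with $e\in\mathrm{Tr}(R)$ and $j\in J(R)$. *)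

(* Defs.v *)
From mathcomp Require Import all_boot all_algebra.
Set Implicit Arguments. Unset Strict Implicit. Unset Printing Implicit Defensive.
Import GRing.Theory.
Local Open Scope ring_scope.

Section RingNotions.
Variable R : unitRingType.

Definition tripotent (x : R) : Prop := x ^+ 3 = x.

Definition idem_elt (x : R) : Prop := x * x = x.

Definition in_Delta (x : R) : Prop :=
  forall u : R, u \is a GRing.unit -> (x + u) \is a GRing.unit.

Definition left_ideal (I : R -> Prop) : Prop :=
  [/\ I 0,
      (forall x y, I x -> I y -> I (x - y)) &
      (forall r x, I x -> I (r * x))].

Definition maximal_left_ideal (M : R -> Prop) : Prop :=
  [/\ left_ideal M, ~ M 1 &
      forall I : R -> Prop, left_ideal I -> (forall x, M x -> I x) ->
        (forall x, I x) \/ (forall x, I x -> M x)].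

Definition in_jacobson (x : R) : Prop :=
  forall M : R -> Prop, maximal_left_ideal M -> M x.

Definition DT_ring : Prop :=
  forall r : R, exists e d, tripotent e /\ in_Delta d /\ r = e + d.

Definition semi_tripotent : Prop :=
  forall r : R, exists e j, tripotent e /\ in_jacobson j /\ r = e + j.

End RingNotions.

(* Main.v *)
Require Import Defs.
From mathcomp Require Import all_boot all_algebra.
From mathcomp Require Import classical_sets.
From Stdlib Require Import Classical.
Import GRing.Theory.
Local Open Scope ring_scope.

Section J.
Variable R : unitRingType.
Implicit Types x y z r s : R.
Notation J := (@in_jacobson R).

Lemma unit_of_inv x y : y * x = 1 -> x * y = 1 -> x \is a GRing.unit.
Proof. by move=> h1 h2; apply/unitrP; exists y. Qed.

Lemma exists_max (L : R -> Prop) : left_ideal L -> ~ L 1 ->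
  exists M, maximal_left_ideal M /\ (forall x, L x -> M x).
Proof.
case=> L0 LB LM nL1.
pose P (A : set R) := [/\ (forall x y, A x -> A y -> A (x - y)),
   (forall r x, A x -> A (r * x)), ~ A 1 &
   ((exists x, A x) -> forall x, L x -> A x)].
have PL : P L by split => // _.
have [] := @Zorn_bigcup R P.
  move=> F FP Ftot; split.
  - move=> x y [X FX Xx] [Y FY Yy].
    have [XY|YX] := Ftot X Y FX FY.
    + exists Y => //; have [h _ _ _] := FP Y FY; exact: h (XY _ Xx) Yy.
    + exists X => //; have [h _ _ _] := FP X FX; exact: h Xx (YX _ Yy).
  - move=> r x [X FX Xx]; exists X => //; have [_ h _ _] := FP X FX; exact: h.
  - move=> [X FX X1]; have [_ _ h _] := FP X FX; exact: h.
  - move=> [x [X FX Xx]] z Lz; exists X => //; have [_ _ _ h] := FP X FX.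
    exact: h (ex_intro _ x Xx) _ Lz.
move=> A [[AB AM nA1 AL] Amax].
have Ane : exists x, A x.
  apply: NNPP => hne; apply: (Amax L _ PL); split.
    by move=> x Ax; exfalso; apply: hne; exists x.
  by move=> h; apply: hne; exists 0; exact: h.
have LA := AL Ane.
exists A; split => //; split.
- split => //; first by case: Ane => x Ax; rewrite -(subrr x); exact: AB.
- exact: nA1.
- move=> I [I0 IB IM] AI.
  have [I1|nI1] := classic (I 1).
    by left => x; rewrite -(mulr1 x); exact: IM.
  right => x Ix; apply: NNPP => nAx.
  have PI : P I by split => // _ z Lz; exact: AI _ (LA _ Lz).
  apply: (Amax I _ PI); split; first exact: AI.
  by move=> h; exact: nAx (h _ Ix).
Qed.

Lemma Jleft x r : J x -> exists y, y * (1 - r * x) = 1.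
Proof.
move=> Jx; apply: NNPP => hn.
pose L z := exists s, z = s * (1 - r * x).
have [] := @exists_max L.
- split; first by exists 0; rewrite mul0r.
  + by move=> _ _ [s1 ->] [s2 ->]; exists (s1 - s2); rewrite mulrBl.
  + by move=> r' _ [s ->]; exists (r' * s); rewrite mulrA.
- by move=> [s h]; apply: hn; exists s.
move=> M [Mmax LM]; have := Mmax; case=> [[M0 MB MM] nM1 _].
apply: nM1.
have h1 : M (1 - r * x) by apply: LM; exists 1; rewrite mul1r.
have h2 : M (r * x) by apply: MM; exact: Jx.
have h3 := MB _ _ h1 (MB _ _ M0 h2).
by move: h3; rewrite sub0r opprK subrK.
Qed.

Lemma Junit x r : J x -> (1 - r * x) \is a GRing.unit.
Proof.
move=> Jx; have [y hy] := Jleft x r Jx.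
have ey : y = 1 - (- (y * r)) * x.
  by rewrite mulNr opprK -mulrA -hy mulrBr mulr1 subrK.
have [z hz] := Jleft x (- (y * r)) Jx.
rewrite -ey in hz.
have zE : z = 1 - r * x by rewrite -[LHS]mulr1 -[X in z * X]hy mulrA hz mul1r.
apply: (unit_of_inv _ _ hy). rewrite -zE. exact hz.
Qed.

Lemma Jchar x : (forall r, exists y, y * (1 - r * x) = 1) -> J x.
Proof.
move=> H M [[M0 MB MM] nM1 Mmax]; apply: NNPP => nMx.
pose I z := exists m s, M m /\ z = m + s * x.
have Iid : left_ideal I.
  split; first by exists 0, 0; rewrite mul0r addr0.
  + move=> _ _ [m1 [s1 [M1 ->]]] [m2 [s2 [M2 ->]]].
    exists (m1 - m2), (s1 - s2); split; first exact: MB.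
    by rewrite mulrBl opprD addrACA.
  + move=> r _ [m [s [Mm ->]]]; exists (r * m), (r * s); split; first exact: MM.
    by rewrite mulrDr mulrA.
have [] := Mmax I Iid.
- by move=> m Mm; exists m, 0; rewrite mul0r addr0.
- move=> /(_ 1) [m [s [Mm e1]]].
  have [y hy] := H s.
  apply: nM1; rewrite -hy; apply: MM.
  suff -> : 1 - s * x = m by [].
  by rewrite e1 addrK.
- by move=> /(_ x) h; apply: nMx; apply: h; exists 0, 1; rewrite mul1r add0r.
Qed.

Lemma J0 : J 0.
Proof. by move=> M [[]]. Qed.
Lemma JB x y : J x -> J y -> J (x - y).
Proof. by move=> hx hy M hM; case: (hM) => [[_ h _] _ _]; apply: h; [apply: hx|apply: hy]. Qed.
Lemma JMl r x : J x -> J (r * x).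
Proof. by move=> hx M hM; case: (hM) => [[_ _ h] _ _]; apply: h; apply: hx. Qed.
Lemma JN x : J x -> J (- x).
Proof. by move=> hx; rewrite -sub0r; apply: JB => //; apply: J0. Qed.
Lemma JD x y : J x -> J y -> J (x + y).
Proof. by move=> hx hy; rewrite -[y]opprK; apply: JB => //; apply: JN. Qed.

Lemma unit_sym (a b : R) : (1 - a * b) \is a GRing.unit -> (1 - b * a) \is a GRing.unit.
Proof.
move=> hu; set u := (1 - a * b)^-1.
have h1 : a * (1 - b * a) = (1 - a * b) * a by rewrite mulrBr mulrBl mulr1 mul1r mulrA.
have h2 : (1 - b * a) * b = b * (1 - a * b) by rewrite mulrBr mulrBl mulr1 mul1r mulrA.
apply: (unit_of_inv _ (1 + b * u * a)).
  rewrite mulrDl mul1r -!mulrA h1 (mulrA u) mulVr // mul1r.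
  by rewrite subrK.
rewrite mulrDr mulr1 !mulrA h2 -(mulrA b) mulrV // mulr1.
by rewrite subrK.
Qed.

Lemma JMr x s : J x -> J (x * s).
Proof.
move=> hx; apply: Jchar => r.
have := Junit x (s * r) hx; rewrite -mulrA => /unit_sym; rewrite mulrA => hu.
by exists (1 - r * x * s)^-1; rewrite mulVr.
Qed.

Lemma Jnat x n : J x -> J (x *+ n).
Proof. by move=> hx; rewrite -mulr_natl; apply: JMl. Qed.

Notation D := (@in_Delta R).

Lemma D_J x : J x -> D x.
Proof.
move=> hx u hu.
have e : x + u = u * (1 - (- u^-1) * x).
  by rewrite mulNr opprK mulrDr mulr1 mulrA mulrV // mul1r addrC.
rewrite e unitrMr //; exact: Junit.
Qed.

Lemma DN (d : R) : D d -> D (- d).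
Proof. by move=> hd u hu; rewrite -[u]opprK -opprD unitrN; apply: hd; rewrite unitrN. Qed.
Lemma DD (a b : R) : D a -> D b -> D (a + b).
Proof. by move=> ha hb u hu; rewrite -addrA; apply: ha; apply: hb. Qed.
Lemma DB (a b : R) : D a -> D b -> D (a - b).
Proof. by move=> ha hb; apply: DD => //; apply: DN. Qed.
Lemma DMl (u d : R) : u \is a GRing.unit -> D d -> D (u * d).
Proof.
move=> hu hd v hv.
have -> : u * d + v = u * (d + u^-1 * v) by rewrite mulrDr mulrA mulrV // mul1r.
rewrite unitrMr //; apply: hd; by rewrite unitrMl // unitrV.
Qed.
Lemma DMr (u d : R) : u \is a GRing.unit -> D d -> D (d * u).
Proof.
move=> hu hd v hv.
have -> : d * u + v = (d + v * u^-1) * u by rewrite mulrDl -mulrA mulVr // mulr1.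
rewrite unitrMl //; apply: hd; by rewrite unitrMr // unitrV.
Qed.
Lemma D1 (d : R) : D d -> (1 - d) \is a GRing.unit.
Proof. by move=> hd; rewrite addrC; apply: DN => //; apply: unitr1. Qed.
Lemma D1p (d : R) : D d -> (1 + d) \is a GRing.unit.
Proof. by move=> hd; rewrite addrC; apply: hd; apply: unitr1. Qed.
Lemma DM (a b : R) : D a -> D b -> D (a * b).
Proof.
move=> ha hb.
have h1 : forall a, D a -> (1 + a * b) \is a GRing.unit.
  move=> a' ha'.
  have -> : 1 + a' * b = (- a' - b) + (1 + a') * (1 + b).
    rewrite mulrDl mul1r mulrDr mulr1.
    by rewrite (addrC 1 b) !addrA subrK (addrC (- a')) subrK.
  apply: DB; [exact: DN|exact: hb|].
  by rewrite unitrMr ?D1p.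
move=> v hv.
have -> : a * b + v = v * (1 + (v^-1 * a) * b) by rewrite mulrDr mulr1 !mulrA mulrV // mul1r addrC.
rewrite unitrMr //; apply: h1; apply: DMl => //; by rewrite unitrV.
Qed.
End J.
Section Core.
Variable R : unitRingType.
Notation J := (@in_jacobson R).
Notation D := (@in_Delta R).

Lemma core (p d : R) : p * p = p -> D d -> exists y, y * (1 - p * d) = 1.
Proof.
move=> pp hd.
have [q qE] : exists q, q = 1 - p by eexists.
have pq : p * q = 0 by rewrite qE mulrBr mulr1 pp subrr.
have [n nE] : exists n, n = q * d * p by eexists.
have nn : n * n = 0 by rewrite nE -!mulrA (mulrA p) pq mul0r !mulr0.
have hu : (1 - n) \is a GRing.unit.
  apply: (@unit_of_inv R _ (1 + n)).
    by rewrite mulrDl mul1r mulrBr mulr1 nn subr0 subrK.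
  by rewrite mulrBl mul1r mulrDr mulr1 nn addr0 addrK.
have hc : D ((1 - n) * d) by apply: DMl.
have hc1 := @D1 R _ hc.
have eq : (1 - q * d) * (1 - p * d) = 1 - (1 - n) * d.
  rewrite mulrBl mul1r mulrBr mulr1 mulrBl mul1r nE.
  have -> : q * d * (p * d) = q * d * p * d by rewrite !mulrA.
  have hd' : d = p * d + q * d by rewrite -mulrDl qE addrC subrK mul1r.
  rewrite [X in _ = 1 - (X - _)]hd'.
  by rewrite !opprD !opprK !addrA.
exists ((1 - (1 - n) * d)^-1 * (1 - q * d)).
by rewrite -mulrA eq mulVr.
Qed.
End Core.
Section DTST.
Variable R : unitRingType.
Notation J := (@in_jacobson R).
Notation D := (@in_Delta R).

Lemma trip3 (e : R) : tripotent e -> e * (e * e) = e.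
Proof. by rewrite /tripotent exprS expr2. Qed.
Lemma tripf (e : R) : tripotent e ->
  [/\ e * (e * e) = e, (e * e) * e = e & (e * e) * (e * e) = e * e].
Proof.
move=> /trip3 h; split => //; first by rewrite -mulrA.
by rewrite mulrA -(mulrA e) h.
Qed.

Lemma DT_Delta_J : DT_ring R -> forall d : R, D d -> J d.
Proof.
move=> hDT d hd; apply: Jchar => r.
have [e [dl [he [hdl ->]]]] := hDT r.
have [h1 h2 h3] := tripf _ he.
have [f fE] : exists f, f = e * e by eexists.
rewrite -fE in h1 h2 h3.
have [v vE] : exists v, v = 1 - f + e by eexists.
have vv : v * v = 1.
  rewrite vE mulrDl mulrBl mul1r !mulrDr !mulrN !mulr1 h3 h1 h2 -fE.
  by rewrite !subrr !add0r addrK subrK.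
have hv : v \is a GRing.unit by apply: (@unit_of_inv R _ v).
have eE : e = v - 1 + f by rewrite vE (addrC _ e) -!addrA (addrCA (-f)) addNr addr0 subrr addr0.
have [d0 d0E] : exists d0, d0 = v * d - d + dl * d by eexists.
have hd0 : D d0 by rewrite d0E; apply: DD; [apply: DB => //; apply: DMl|apply: DM].
have hw := @D1 R _ hd0.
set w := 1 - d0 in hw.
have rdE : 1 - (e + dl) * d = w - f * d.
  rewrite eE /w d0E !mulrDl mulN1r.
  by rewrite !opprD !opprK !addrA [LHS]addrAC.
pose f' := w^-1 * f * w.
have ff' : f' * f' = f'.
  by rewrite /f' !mulrA -(mulrA _ w) mulrV // mulr1 -(mulrA (w^-1) f f) h3.
have hd' : D (w^-1 * d) by apply: DMl => //; rewrite unitrV.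
have [y hy] := @core R _ _ ff' hd'.
exists (y * w^-1); rewrite rdE -mulrA mulrBr mulVr //.
rewrite -[RHS]hy; congr (y * (1 - _)).
by rewrite /f' !mulrA -(mulrA _ w) mulrV // mulr1.
Qed.

Lemma ST_DT : semi_tripotent R -> DT_ring R.
Proof.
move=> h r; have [e [j [he [hj ->]]]] := h r.
by exists e, j; split => //; split => //; apply: D_J.
Qed.
End DTST.

Arguments J0 {R}.
Arguments JB {R x y}.
Arguments JMl {R} r {x}.
Arguments JMr {R x} s.
Arguments JN {R x}.
Arguments JD {R x y}.
Arguments Junit {R x} r.
Arguments Jnat {R x} n.

Section Cong.
Variable R : unitRingType.
Notation J := (@in_jacobson R).
Implicit Types x y z : R.

Definition cg x y := J (x - y).
Lemma cg_refl x : cg x x. Proof. by rewrite /cg subrr; apply: J0. Qed.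
Lemma cg_sym x y : cg x y -> cg y x.
Proof. by rewrite /cg => h; rewrite -opprB; apply: JN. Qed.
Lemma cg_trans x y z : cg x y -> cg y z -> cg x z.
Proof. by rewrite /cg => h1 h2; have := JD h1 h2; rewrite addrA subrK. Qed.
Lemma cgD x y x' y' : cg x x' -> cg y y' -> cg (x + y) (x' + y').
Proof. by rewrite /cg => h1 h2; have := JD h1 h2; rewrite opprD addrACA. Qed.
Lemma cgN x y : cg x y -> cg (- x) (- y).
Proof. by rewrite /cg => h; rewrite -opprD; apply: JN. Qed.
Lemma cgB x y x' y' : cg x x' -> cg y y' -> cg (x - y) (x' - y').
Proof. by move=> h1 h2; apply: cgD => //; apply: cgN. Qed.
Lemma cgM x y x' y' : cg x x' -> cg y y' -> cg (x * y) (x' * y').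
Proof.
rewrite /cg => h1 h2.
have := JD (JMr y h1) (JMl x' h2).
by rewrite mulrBl mulrBr addrA subrK.
Qed.
Arguments cg_sym {x y}.
Arguments cg_trans {x y z}.
Arguments cgD {x y x' y'}.
Arguments cgN {x y}.
Arguments cgB {x y x' y'}.
Arguments cgM {x y x' y'}.
Lemma cg0 x : cg x 0 <-> J x.
Proof. by rewrite /cg subr0. Qed.
Lemma cgJ x y : J y -> cg (x + y) x.
Proof. by rewrite /cg addrC addKr. Qed.
Lemma cgJ' x y : J (y - x) -> cg x y.
Proof. by move=> h; apply: cg_sym. Qed.

Definition LIFT := forall z, J (z * z - z) -> exists h, h * h = h /\ J (z - h).

Lemma ortho g h : g * g = g -> h * h = h -> J (h * g) -> J (g * h) ->
  exists f, [/\ f * f = f, g * f = 0, f * g = 0 & J (f - h)].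
Proof.
move=> gg hh Jhg Jgh.
have hw := Junit 1 Jhg; rewrite mul1r in hw.
set w := 1 - h * g in hw.
have [h2 h2E] : exists h2, h2 = w^-1 * h * w by eexists.
have h2g : h2 * g = 0.
  by rewrite h2E -!mulrA /w mulrBl mul1r -mulrA gg mulrBr (mulrA h h) hh subrr !mulr0.
have h2h2 : h2 * h2 = h2.
  by rewrite h2E !mulrA -(mulrA _ w) mulrV // mulr1 -(mulrA (w^-1) h h) hh.
have cw : cg w 1 by rewrite /cg /w addrAC subrr add0r; apply: JN.
have cwi : cg (w^-1) 1.
  rewrite /cg.
  have -> : w^-1 - 1 = w^-1 * (1 - w) by rewrite mulrBr mulr1 mulVr.
  apply: JMl.
  by rewrite /w opprB addrC subrK.
have ch2 : cg h2 h.
  have := cgM (cgM cwi (cg_refl h)) cw; by rewrite mul1r mulr1 -h2E.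
exists ((1 - g) * h2); split.
- rewrite mulrBl mul1r mulrBl !mulrBr !mulrA h2g mul0r -(mulrA g h2 g) h2g mulr0 mul0r.
  by rewrite -(mulrA g h2 h2) h2h2 !subr0.
- by rewrite mulrA mulrBr mulr1 gg subrr mul0r.
- by rewrite -mulrA h2g mulr0.
- rewrite mulrBl mul1r.
  have : cg (h2 - g * h2) (h - g * h) by apply: cgB => //; apply: cgM => //; apply: cg_refl.
  move/cg_trans; apply.
  by rewrite /cg addrAC subrr add0r; apply: JN.
Qed.

Lemma corner_lift z c : LIFT -> c * c = c -> J (z * z - z) ->
  z * (1 - c) = 0 -> (1 - c) * z = 0 ->
  exists f, [/\ f * f = f, c * f = f, f * c = f & J (f - z)].
Proof.
move=> hL cc hz zc cz.
have [h [hh hzh]] := hL z hz.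
have c1 : (1 - c) * (1 - c) = 1 - c.
  by rewrite mulrBl mul1r mulrBr mulr1 cc subrr subr0.
have chz : cg h z by apply: cg_sym.
have J1 : J (h * (1 - c)).
  have := cgM chz (cg_refl (1 - c)); rewrite zc; by move/cg0.
have J2 : J ((1 - c) * h).
  have := cgM (cg_refl (1 - c)) chz; rewrite cz; by move/cg0.
have [f [ff f1 f2 fh]] := ortho _ _ c1 hh J1 J2.
exists f; split => //.
- by move: f1; rewrite mulrBl mul1r => /eqP; rewrite subr_eq0 => /eqP <-.
- by move: f2; rewrite mulrBr mulr1 => /eqP; rewrite subr_eq0 => /eqP <-.
- exact: cg_trans fh chz.
Qed.
End Cong.

Arguments cg {R}.
Arguments cg_refl {R}.
Arguments cg_sym {R x y}.
Arguments cg_trans {R x y z}.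
Arguments cgD {R x y x' y'}.
Arguments cgN {R x y}.
Arguments cgB {R x y x' y'}.
Arguments cgM {R x y x' y'}.
Arguments cgJ {R} x {y}.

Section Alg.
Variable R : unitRingType.
Notation J := (@in_jacobson R).
Implicit Types x y z a b : R.

Lemma orth_sum a b : a * a = a -> b * b = b -> a * b = 0 -> b * a = 0 ->
  (a + b) * (a + b) = a + b.
Proof. by move=> aa bb ab ba; rewrite mulrDl !mulrDr aa bb ab ba addr0 add0r. Qed.

Lemma orth_trip a b : a * a = a -> b * b = b -> a * b = 0 -> b * a = 0 ->
  tripotent (a - b).
Proof.
move=> aa bb ab ba; rewrite /tripotent exprS expr2.
have sq : (a - b) * (a - b) = a + b by rewrite mulrBl !mulrBr aa ab ba bb subr0 sub0r opprK.
rewrite sq.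
by rewrite mulrBl !mulrDr aa ab ba bb addr0 add0r.
Qed.

Lemma mul3 x : x *+ 3 = x + x + x.
Proof. by rewrite !mulrS mulr0n addr0 addrA. Qed.

Lemma comm_idem (e f : R) : e * e = e -> f * f = f -> e * f = f * e ->
  [/\ (e * f) * (e * f) = e * f, e * (e * f) = e * f, (e * f) * e = e * f,
      f * (e * f) = e * f & (e * f) * f = e * f].
Proof.
move=> ee ff ef; split.
- by rewrite -mulrA (mulrA f) -ef -mulrA ff mulrA ee.
- by rewrite mulrA ee.
- by rewrite -mulrA -ef mulrA ee.
- by rewrite mulrA -ef -mulrA ff.
- by rewrite -mulrA ff.
Qed.

Lemma comm_split (e f : R) : e * e = e -> f * f = f -> e * f = f * e ->
  [/\ (e - e * f) * (e - e * f) = e - e * f, (f - e * f) * (f - e * f) = f - e * f,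
      (e - e * f) * (f - e * f) = 0 & (f - e * f) * (e - e * f) = 0].
Proof.
move=> ee ff ef; have [pp ep pe fp pf] := comm_idem _ _ ee ff ef.
move: pp ep pe fp pf; set p := e * f => pp ep pe fp pf.
have fe : f * e = p by rewrite -ef.
split.
- by rewrite mulrBl !mulrBr ee ep pe pp subrr subr0.
- by rewrite mulrBl !mulrBr ff fp pf pp subrr subr0.
- by rewrite mulrBl !mulrBr -/p ep pf pp !subrr ?subr0.
- by rewrite mulrBl !mulrBr fe fp pe pp !subrr ?subr0.
Qed.

Lemma comm_sq (e f : R) : e * e = e -> f * f = f -> e * f = f * e ->
  (e + f) * (e + f) - (e + f) = (e * f) *+ 2.
Proof.
move=> ee ff ef.
rewrite mulrDl !mulrDr ee ff -ef (addrC (e * f) f) addrACA (addrC (e + f) (_ + _)) addrK.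
by rewrite mulr2n.
Qed.

Lemma corner_z (c : R) : c * c = c ->
  [/\ (- (c *+ 2)) * (1 - c) = 0, (1 - c) * (- (c *+ 2)) = 0 &
      (- (c *+ 2)) * (- (c *+ 2)) - (- (c *+ 2)) = 6%:R * c].
Proof.
move=> cc; split.
- by rewrite mulNr mulrnAl mulrBr mulr1 cc subrr mul0rn oppr0.
- by rewrite mulrN mulrnAr mulrBl mul1r cc subrr mul0rn oppr0.
- by rewrite mulrNN !mulrnAl !mulrnAr cc mul1r opprK -!mulrnA -mulrnDr.
Qed.
End Alg.

Arguments orth_sum {R a b}.
Arguments orth_trip {R a b}.
Arguments comm_idem {R e f}.
Arguments comm_split {R e f}.
Arguments comm_sq {R e f}.
Arguments corner_z {R c}.
Arguments ortho {R g h}.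
Arguments corner_lift {R} z {c}.

Arguments tripf {R e}.
Section STsec.
Variable R : unitRingType.
Notation J := (@in_jacobson R).
Hypothesis hST : semi_tripotent R.

Lemma st_six : J 6%:R.
Proof.
have [t [j [ht [hj e2]]]] := hST 2%:R.
have [h1 _ _] := tripf ht.
have c : cg (2%:R : R) t by rewrite e2; apply: cgJ.
have := cgM (cgM c c) c; rewrite -(mulrA t t t) h1 => c3.
have := cg_trans c3 (cg_sym c); rewrite /cg -!natrM -natrB //.
Qed.

Lemma st_red x : J (x * x) -> J x.
Proof.
move=> hx; have [t [j [ht [hj xe]]]] := hST x; rewrite xe in hx *.
have [h1 _ _] := tripf ht.
have c : cg (t + j) t by apply: cgJ.
have htt : J (t * t).
  by have := cg_trans (cg_sym (cgM c c)) (proj2 (cg0 _ _) hx); rewrite /cg subr0.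
apply: JD => //; rewrite -h1; exact: JMl.
Qed.

Lemma st_lift : LIFT R.
Proof.
move=> z hz; have [t [j [ht [hj ze]]]] := hST z.
have [h1 h2 h3] := tripf ht.
exists (t * t); split => //.
have c : cg z t by rewrite ze; apply: cgJ.
apply: cg_trans (cgM c c); exact: cg_sym.
Qed.

Lemma st_5 (a : R) : exists e f j : R, idem_elt e /\ idem_elt f /\ e * f = 0 /\ f * e = 0 /\
           in_jacobson j /\ a = e - f + j.
Proof.
have [t [j [ht [hj ae]]]] := hST a.
have [h1 h2 h3] := tripf ht.
have [f0 f0E] : exists f0, f0 = t * t by eexists.
rewrite -f0E in h1 h2 h3.
have [z zE] : exists z, z = t - f0 by eexists.
have zf : z * f0 = z by rewrite zE mulrBl h1 h3.
have fz : f0 * z = z by rewrite zE mulrBr h2 h3.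
have zc : z * (1 - f0) = 0 by rewrite mulrBr mulr1 zf subrr.
have cz : (1 - f0) * z = 0 by rewrite mulrBl mul1r fz subrr.
have zz : z * z = - (z + z).
  have tz : t * z = - z by rewrite zE mulrBr -f0E h1 opprB.
  by rewrite {1}zE mulrBl tz fz opprD.
have Jk : J (z *+ 3).
  apply: st_red.
  have -> : (z *+ 3) * (z *+ 3) = - (6%:R * (z *+ 3)).
    by rewrite !mulrnAl !mulrnAr mul1r zz -mulr2n !mulNrn -!mulrnA.
  by apply: JN; apply: JMr; exact: st_six.
have Jz : J (z * z - z).
  by rewrite zz -opprD -mul3; apply: JN.
have [f [ff c1 c2 fz']] := corner_lift z st_lift h3 Jz zc cz.
exists (f0 - f), f, (a - (f0 - f - f)); split.
  by rewrite /idem_elt mulrBl !mulrBr h3 c1 c2 ff subrr subr0.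
split => //.
split; first by rewrite mulrBl c1 ff subrr.
split; first by rewrite mulrBr c2 ff subrr.
split; last by rewrite addrC subrK.
have ca : cg a t by rewrite ae; apply: cgJ.
apply: cg_trans ca _.
have cf : cg (f0 - z - z) (f0 - f - f).
  have cfz := cg_sym fz'.
  by apply: cgB => //; apply: cgB => //; apply: cg_refl.
apply: cg_trans _ cf.
rewrite /cg !opprD !opprK !addrA -zE -mul3.
exact: Jk.
Qed.

Lemma st_3 (a : R) : exists e f j : R, idem_elt e /\ idem_elt f /\ e * f = f * e /\
           in_jacobson j /\ a = e + f + j.
Proof.
have [g [f [j [gg [ff [gf [fg [hj ae]]]]]]]] := st_5 a.
have [zc cz zz] := corner_z ff.
have Jz : J ((- (f *+ 2)) * (- (f *+ 2)) - (- (f *+ 2))).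
  by rewrite zz; apply: JMr; exact: st_six.
have [k [kk c1 c2 kz]] := corner_lift _ st_lift ff Jz zc cz.
have gk : g * k = 0 by rewrite -c1 mulrA gf mul0r.
have kg : k * g = 0 by rewrite -c2 -mulrA fg mulr0.
exists (g + f), k, (a - (g + f + k)); split.
  by rewrite /idem_elt orth_sum.
split => //.
split; first by rewrite mulrDl mulrDr gk c1 kg c2 !add0r.
split; last by rewrite addrC subrK.
have c : cg a (g - f) by rewrite ae; apply: cgJ.
apply: cg_trans c _.
have : cg (g + f + (- (f *+ 2))) (g + f + k).
  by apply: cgD; [apply: cg_refl | apply: cg_sym].
by rewrite mulr2n opprD addrA addrK.
Qed.
End STsec.

Section P3sec.
Variable R : unitRingType.
Notation J := (@in_jacobson R).
Hypothesis H3 : forall a : R, exists e f j, idem_elt e /\ idem_elt f /\ e * f = f * e /\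
           in_jacobson j /\ a = e + f + j.

Lemma G_facts (e f : R) : e * e = e -> f * f = f -> e * f = f * e ->
  let G := (e - e * f) + (f - e * f) in
  [/\ G * G = G, G = e + f - (e * f) *+ 2, G * (e * f) = 0 & (e * f) * G = 0].
Proof.
move=> ee ff ef G.
have [a1 a2 a3 a4] := comm_split ee ff ef.
have [pp ep pe fp pf] := comm_idem ee ff ef.
split.
- exact: orth_sum.
- by rewrite /G addrACA -opprD mulr2n.
- by rewrite /G mulrDl !mulrBl ep pp fp !subrr addr0.
- by rewrite /G mulrDr !mulrBr pe pp pf !subrr addr0.
Qed.

Lemma p3_lift : LIFT R.
Proof.
move=> z hz; have [e [f [j [ee [ff [ef [hj ze]]]]]]] := H3 z.
have [GG GE _ _] := G_facts _ _ ee ff ef.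
exists ((e - e * f) + (f - e * f)); split => //.
have c : cg z (e + f) by rewrite ze; apply: cgJ.
have c2 := cgB (cgM c c) c; rewrite comm_sq // in c2.
have Jp : J ((e * f) *+ 2).
  by have := cg_trans (cg_sym c2) (proj2 (cg0 _ _) hz); rewrite /cg subr0.
apply: cg_trans c _.
by rewrite /cg GE opprB addrC subrK.
Qed.

Lemma p3_six : J 6%:R.
Proof.
have [e [f [j [ee [ff [ef [hj ze]]]]]]] := H3 3%:R.
have [pp ep pe fp pf] := comm_idem ee ff ef.
have c : cg (3%:R : R) (e + f) by rewrite ze; apply: cgJ.
have c1 := cg_sym (cgB (cgM c c) c); rewrite comm_sq // in c1.
have c2 := cgM c1 (cg_sym c).
have c3 := cgD c1 c1.
rewrite mulrnAl mulrDr pe pf in c2.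
rewrite -mulrnDl in c3.
have := cg_trans (cg_sym c2) c3.
by rewrite /cg -!natrM -!natrB // -natrM -natrD -natrB.
Qed.

Lemma p3_5 (a : R) : exists e f j : R, idem_elt e /\ idem_elt f /\ e * f = 0 /\ f * e = 0 /\
           in_jacobson j /\ a = e - f + j.
Proof.
have [e [f [j [ee [ff [ef [hj ae]]]]]]] := H3 a.
have [pp ep pe fp pf] := comm_idem ee ff ef.
have [GG GE Gp pG] := G_facts _ _ ee ff ef.
move: GG GE Gp pG; set G := (e - e * f) + (f - e * f).
move: pp ep pe fp pf; set p := e * f => pp ep pe fp pf GG GE Gp pG.
have [zc cz zz] := corner_z pp.
have Jz : J ((- (p *+ 2)) * (- (p *+ 2)) - (- (p *+ 2))).
  by rewrite zz; apply: JMr; exact: p3_six.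
have [k [kk c1 c2 kz]] := corner_lift _ p3_lift pp Jz zc cz.
exists G, k, (a - (G - k)); split => //.
split => //.
split; first by rewrite -c1 mulrA Gp mul0r.
split; first by rewrite -c2 -mulrA pG mulr0.
split; last by rewrite addrC subrK.
have c : cg a (e + f) by rewrite ae; apply: cgJ.
apply: cg_trans c _.
have : cg (G - (- (p *+ 2))) (G - k) by apply: cgB; [apply: cg_refl | apply: cg_sym].
by rewrite GE opprK subrK.
Qed.
End P3sec.

Section Final.
Variable R : unitRingType.

Lemma p4_2 : (forall a : R, exists e f j, idem_elt e /\ idem_elt f /\ e * f = f * e /\
           in_jacobson j /\ a = e - f + j) -> semi_tripotent R.
Proof.
move=> H a; have [e [f [j [ee [ff [ef [hj ae]]]]]]] := H a.
have [a1 a2 a3 a4] := comm_split ee ff ef.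
exists ((e - e * f) - (f - e * f)), j; split; first exact: orth_trip.
split => //; rewrite ae; congr (_ + _).
by rewrite opprB addrA subrK.
Qed.

Lemma p5_4 : (forall a : R, exists e f j, idem_elt e /\ idem_elt f /\ e * f = 0 /\ f * e = 0 /\
           in_jacobson j /\ a = e - f + j) ->
  (forall a : R, exists e f j, idem_elt e /\ idem_elt f /\ e * f = f * e /\
           in_jacobson j /\ a = e - f + j).
Proof.
move=> H a; have [e [f [j [ee [ff [ef [fe [hj ae]]]]]]]] := H a.
by exists e, f, j; rewrite ef fe.
Qed.
End Final.

Theorem theorem4p10 (R : unitRingType) :
  [/\ (DT_ring R <-> semi_tripotent R),
      (semi_tripotent R <->
         forall a : R, exists e f j, idem_elt e /\ idem_elt f /\ e * f = f * e /\
           in_jacobson j /\ a = e + f + j),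
      (semi_tripotent R <->
         forall a : R, exists e f j, idem_elt e /\ idem_elt f /\ e * f = f * e /\
           in_jacobson j /\ a = e - f + j) &
      (semi_tripotent R <->
         forall a : R, exists e f j, idem_elt e /\ idem_elt f /\ e * f = 0 /\ f * e = 0 /\
           in_jacobson j /\ a = e - f + j)].
Proof.
split.
- split; last exact: ST_DT.
  move=> h r; have [e [d [he [hd ->]]]] := h r.
  by exists e, d; split => //; split => //; apply: DT_Delta_J.
- split; first by move=> h; exact: st_3.
  by move=> H3; apply: p4_2; apply: p5_4; exact: p3_5.
- split; first by move=> h; apply: p5_4; exact: st_5.
  exact: p4_2.
- split; first by move=> h; exact: st_5.
  by move=> H; apply: p4_2; apply: p5_4.
Qed.
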